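(* For every positive integer $m$ such that the shell $(\mathbb{Z}^2)_m=\{x\in\mathbb{Z}^2 : (x,x)=m\}$ is nonempty, the shell $(\mathbb{Z}^2)_m$ is not a spherical $4$-design.
   Context: $(x,y)$ denotes the standard Euclidean inner product on $\mathbb{R}^2$. A finite nonempty set $X\subset S^{n-1}=\{x\in\mathbb{R}^n: x_1^2+\cdots+x_n^2=1\}$ is a spherical $t$-design if $\frac{1}{|X|}\sum_{x\in X}f(x)=\frac{1}{|S^{n-1}|}\int_{S^{n-1}}f(x)\,d\sigma(x)$ for all polynomials $f$ of degree at most $t$; a finite nonempty subset $X$ of the sphere $S^{n-1}(r)$ of radius $r$ is a spherical $t$-design if $\frac{1}{r}X$ is one. (For $n=2$, identifying $\mathbb{R}^2$ with $\mathbb{C}$, a finite set $\{\xi_1,\dots,\xi_N\}$ on the unit circle is a spherical $t$-design iff $\sum_i \xi_i^k=0$ for all $k=1,\dots,t$.) *)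

(* Defs.v *)
From Stdlib Require Import Reals Lra Lia ZArith List.
From Coquelicot Require Import Coquelicot.
Import ListNotations.
Open Scope R_scope.

Definition poly2_deg_le (t : nat) (f : R -> R -> R) : Prop :=
  exists l : list (R * nat * nat),
    List.Forall (fun m => (snd (fst m) + snd m <= t)%nat) l /\
    forall x y : R,
      f x y = fold_right
                (fun m acc => fst (fst m) * x ^ (snd (fst m)) * y ^ (snd m) + acc)
                0 l.

Definition circle_avg (f : R -> R -> R) : R :=
  RInt (fun th => f (cos th) (sin th)) 0 (2 * PI) / (2 * PI).

Definition list_avg (f : R -> R -> R) (X : list (R * R)) : R :=
  fold_right (fun p acc => f (fst p) (snd p) + acc) 0 X / INR (length X).

Definition is_spherical_design_S1 (t : nat) (X : list (R * R)) : Prop :=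
  X <> [] /\ NoDup X /\
  List.Forall (fun p => fst p ^ 2 + snd p ^ 2 = 1) X /\
  forall f, poly2_deg_le t f -> list_avg f X = circle_avg f.

Definition is_spherical_design_r (t : nat) (r : R) (X : list (R * R)) : Prop :=
  is_spherical_design_S1 t (map (fun p => (fst p / r, snd p / r)) X).

Definition zrange (m : nat) : list Z :=
  map (fun k => (Z.of_nat k - Z.of_nat m)%Z) (seq 0 (2 * m + 1)).

Definition shell (m : nat) : list (Z * Z) :=
  filter (fun p => Z.eqb (fst p * fst p + snd p * snd p) (Z.of_nat m))
         (list_prod (zrange m) (zrange m)).

Definition shell_R (m : nat) : list (R * R) :=
  map (fun p => (IZR (fst p), IZR (snd p))) (shell m).

(* Main.v *)
Require Import Defs.
From Stdlib Require Import Reals ZArith List.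
From Stdlib Require Import Znumtheory Lia Lra Permutation Bool Classical.
Import ListNotations.
Open Scope Z_scope.

Definition sumZ (f : Z * Z -> Z) (l : list (Z * Z)) : Z :=
  fold_right (fun z acc => f z + acc) 0 l.

Lemma sumZ_perm f l1 l2 : Permutation l1 l2 -> sumZ f l1 = sumZ f l2.
Proof. induction 1; simpl; lia. Qed.

Lemma sumZ_same f l1 l2 : NoDup l1 -> NoDup l2 ->
  (forall z, In z l1 <-> In z l2) -> sumZ f l1 = sumZ f l2.
Proof. intros; apply sumZ_perm, NoDup_Permutation; auto. Qed.

Lemma sumZ_filter f P l :
  sumZ f l = sumZ f (filter P l) + sumZ f (filter (fun z => negb (P z)) l).
Proof. induction l as [|a l IH]; simpl; [lia|]. destruct (P a); simpl; lia. Qed.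

Lemma sumZ_map f h l : sumZ f (map h l) = sumZ (fun z => f (h z)) l.
Proof. induction l; simpl; lia. Qed.

Lemma sumZ_ext f g l : (forall z, In z l -> f z = g z) -> sumZ f l = sumZ g l.
Proof. induction l as [|a l IH]; simpl; intros H; [lia|].
  rewrite H by auto. rewrite IH by auto. lia. Qed.

Lemma sumZ_scale c f l : sumZ (fun z => c * f z) l = c * sumZ f l.
Proof. induction l; simpl; lia. Qed.

Lemma sumZ_add f g l : sumZ (fun z => f z + g z) l = sumZ f l + sumZ g l.
Proof. induction l; simpl; lia. Qed.

Lemma NoDup_list_prod' {A B} (l1 : list A) (l2 : list B) :
  NoDup l1 -> NoDup l2 -> NoDup (list_prod l1 l2).
Proof.
  induction 1 as [|a l1 Ha H1 IH]; intros H2; simpl; [constructor|].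
  apply NoDup_app.
  - apply NoDup_map_NoDup_ForallPairs; auto.
    intros x y _ _ E; now inversion E.
  - now apply IH.
  - intros [x y] Hin Hin2. apply in_map_iff in Hin as [y' [E _]].
    inversion E; subst. apply in_prod_iff in Hin2 as [Hx _]. contradiction.
Qed.

Lemma zrange_NoDup m : NoDup (zrange m).
Proof.
  unfold zrange. apply NoDup_map_NoDup_ForallPairs; [|apply seq_NoDup].
  intros x y _ _ E; lia.
Qed.

Lemma in_zrange m x : In x (zrange m) <-> - Z.of_nat m <= x <= Z.of_nat m.
Proof.
  unfold zrange. rewrite in_map_iff. split.
  - intros [k [E Hk]]. apply in_seq in Hk. lia.
  - intros H. exists (Z.to_nat (x + Z.of_nat m)). split; [lia|].
    apply in_seq. lia.
Qed.

Definition shZ (n : Z) := shell (Z.to_nat n).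

Lemma shZ_NoDup n : NoDup (shZ n).
Proof. apply NoDup_filter, NoDup_list_prod'; apply zrange_NoDup. Qed.

Lemma in_shZ n x y : 0 <= n -> (In (x, y) (shZ n) <-> x * x + y * y = n).
Proof.
  intros Hn. unfold shZ, shell. rewrite filter_In, in_prod_iff, !in_zrange. simpl.
  rewrite Z.eqb_eq. rewrite Z2Nat.id by lia. split; [tauto|].
  intros H; repeat split; try nia; auto.
Qed.

Lemma in_shZ' n z : 0 <= n -> (In z (shZ n) <-> fst z * fst z + snd z * snd z = n).
Proof. destruct z; apply in_shZ. Qed.

Definition F (z : Z * Z) : Z :=
  let (x, y) := z in x^4 - 6 * x^2 * y^2 + y^4.

Definition Rs (n : Z) : Z := sumZ F (shZ n).

Definition gmul (g z : Z * Z) : Z * Z :=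
  let (a, b) := g in let (u, v) := z in (a * u - b * v, a * v + b * u).

Definition gdiv (g z : Z * Z) : bool :=
  let (a, b) := g in let (x, y) := z in
  ((x * a + y * b) mod (a*a+b*b) =? 0) && ((y * a - x * b) mod (a*a+b*b) =? 0).

Lemma img_shZ a b k z : 0 < a*a+b*b -> 0 <= k ->
  (In z (map (gmul (a, b)) (shZ k)) <->
   fst z * fst z + snd z * snd z = (a*a+b*b) * k /\ gdiv (a, b) z = true).
Proof.
  intros Hq Hk. set (q := a*a+b*b) in *. destruct z as [x y]; simpl.
  rewrite in_map_iff. split.
  - intros [[u v] [E Hin]]. apply in_shZ in Hin; auto. simpl in E.
    inversion E; subst x y. split; [subst q; nia|].
    apply andb_true_intro; split; apply Z.eqb_eq, Z.mod_divide; try lia.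
    + exists u. subst q; ring.
    + exists v. subst q; ring.
  - intros [HN Hd]. apply andb_prop in Hd as [H1 H2].
    apply Z.eqb_eq, Z.mod_divide in H1; [|lia]. apply Z.eqb_eq, Z.mod_divide in H2; [|lia].
    destruct H1 as [u Hu]. destruct H2 as [v Hv].
    exists (u, v). split.
    + simpl. f_equal.
      * apply (Z.mul_reg_l _ _ q); [lia|].
        subst q. transitivity (a * (u * (a*a+b*b)) - b * (v * (a*a+b*b))); [ring|]. rewrite <- Hu, <- Hv. ring.
      * apply (Z.mul_reg_l _ _ q); [lia|].
        subst q. transitivity (a * (v * (a*a+b*b)) + b * (u * (a*a+b*b))); [ring|]. rewrite <- Hu, <- Hv. ring.
    + apply in_shZ; auto. apply (Z.mul_reg_l _ _ (q*q)); [nia|].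
      assert (E: (x*a+y*b)*(x*a+y*b) + (y*a-x*b)*(y*a-x*b) = (x*x+y*y)*q) by (subst q; ring).
      rewrite Hu, Hv, HN in E. nia.
Qed.

Lemma gmul_inj a b : 0 < a*a+b*b -> forall w w', gmul (a,b) w = gmul (a,b) w' -> w = w'.
Proof.
  intros Hq [u v] [u' v'] E. simpl in E. inversion E as [[E1 E2]].
  assert (a * (a*u - b*v) + b * (a*v+b*u) = a * (a*u' - b*v') + b * (a*v'+b*u')) by (rewrite E1, E2; ring).
  assert (a * (a*v + b*u) - b * (a*u-b*v) = a * (a*v' + b*u') - b * (a*u'-b*v')) by (rewrite E1, E2; ring).
  f_equal; apply (Z.mul_reg_l _ _ (a*a+b*b)); nia.
Qed.

Lemma img_NoDup a b k : 0 < a*a+b*b -> NoDup (map (gmul (a,b)) (shZ k)).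
Proof.
  intros Hq. apply NoDup_map_NoDup_ForallPairs; [|apply shZ_NoDup].
  intros w w' _ _. apply gmul_inj; auto.
Qed.

Lemma Rs_mul a b k c : 0 < a*a+b*b -> 0 <= k ->
  (forall z, fst z * fst z + snd z * snd z = (a*a+b*b) * k -> gdiv (a,b) z = true) ->
  (forall w, F (gmul (a,b) w) = c * F w) ->
  Rs ((a*a+b*b) * k) = c * Rs k.
Proof.
  intros Hq Hk Hd HF. unfold Rs.
  rewrite (sumZ_same F (shZ _) (map (gmul (a,b)) (shZ k))).
  - rewrite sumZ_map, <- sumZ_scale. apply sumZ_ext; auto.
  - apply shZ_NoDup.
  - apply img_NoDup; auto.
  - intros z. rewrite img_shZ, in_shZ' by nia. split; [|tauto]. intros H; split; auto.
Qed.


Lemma gdiv_spec a b x y : 0 < a*a+b*b ->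
  (gdiv (a,b) (x,y) = true <-> ((a*a+b*b) | x*a+y*b) /\ ((a*a+b*b) | y*a-x*b)).
Proof.
  intros Hq. simpl. rewrite andb_true_iff, !Z.eqb_eq, <- !Z.mod_divide by lia. tauto.
Qed.

Lemma F_split a b w : F (gmul (a,b) w) + F (gmul (a,-b) w) =
   (2 * (a^4 - 6*a^2*b^2 + b^4)) * F w.
Proof. destruct w; cbv [F gmul]; ring. Qed.

Lemma F_scal p w : F (gmul (p,0) w) = p^4 * F w.
Proof. destruct w; cbv [F gmul]; ring. Qed.

Lemma F_1i w : F (gmul (1,1) w) = -4 * F w.
Proof. destruct w; cbv [F gmul]; ring. Qed.

Section Split.
Variables p a b : Z.
Hypothesis Hp : prime p.
Hypothesis Hp2 : p <> 2.
Hypothesis Hab : a*a+b*b = p.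

Lemma p_gt1 : 1 < p. Proof. destruct Hp; auto. Qed.

Lemma p_nda : ~ (p | a).
Proof.
  intros [c Hc]. pose proof p_gt1.
  assert (p | b*b). { exists (1 - c*c*p). assert (b*b = p - a*a) by lia. rewrite H0, Hc. ring. }
  apply prime_mult in H0; auto. assert (Hb: (p | b)) by tauto. destruct Hb as [d Hd].
  rewrite Hc, Hd in Hab. assert (p * (p * (c*c+d*d)) = p * 1) by lia.
  apply Z.mul_reg_l in H1; [|lia].
  assert (0 <= c*c+d*d) by nia. destruct (Z.eq_dec (c*c+d*d) 0) as [E|E].
  - rewrite E in H1. lia.
  - assert (p * 1 <= p * (c*c+d*d)) by (apply Z.mul_le_mono_nonneg_l; lia). lia.
Qed.

Lemma p_nd2 : ~ (p | 2).
Proof.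
  intros H. pose proof p_gt1. apply Z.divide_pos_le in H; [|lia].
  assert (p = 2) by lia. contradiction.
Qed.

Lemma p_cancel c x : ~ (p | c) -> (p | c * x) -> (p | x).
Proof. intros Hc H. apply prime_mult in H; auto. tauto. Qed.

Lemma split_d x y k : x*x+y*y = p*k ->
  gdiv (a,b) (x,y) = true \/ gdiv (a,-b) (x,y) = true.
Proof.
  intros HN. pose proof p_gt1.
  rewrite !gdiv_spec by nia.
  replace (a*a + -b*-b) with p by (rewrite <- Hab; ring). rewrite Hab.
  assert (Hd: (p | (x*a+y*b)*(x*a-y*b))).
  { exists (a*a*k - y*y). transitivity (a*a*(x*x+y*y) - y*y*(a*a+b*b)); [ring|].
    rewrite HN, Hab. ring. }
  apply prime_mult in Hd; auto. destruct Hd as [Hd|Hd].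
  - left. split; auto. apply (p_cancel a); [apply p_nda|].
    destruct Hd as [c Hc]. exists (y - b*c).
    transitivity (y*(a*a+b*b) - b*(x*a+y*b)); [ring|]. rewrite Hc, Hab. ring.
  - right. split; [replace (x*a + y * -b) with (x*a-y*b) by ring; auto|].
    apply (p_cancel a); [apply p_nda|].
    destruct Hd as [c Hc]. exists (y + b*c).
    transitivity (y*(a*a+b*b) + b*(x*a-y*b)); [ring|]. rewrite Hc, Hab. ring.
Qed.

Lemma split_both x y :
  gdiv (a,b) (x,y) = true /\ gdiv (a,-b) (x,y) = true <-> (p | x) /\ (p | y).
Proof.
  pose proof p_gt1.
  rewrite !gdiv_spec by nia.
  replace (a*a + -b*-b) with p by (rewrite <- Hab; ring). rewrite Hab.
  split.
  - intros [[H1 H2] [H3 H4]]. split.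
    + apply (p_cancel 2); [apply p_nd2|]. apply (p_cancel a); [apply p_nda|].
      replace (a * (2 * x)) with ((x*a+y*b) + (x*a + y * -b)) by ring.
      now apply Z.divide_add_r.
    + apply (p_cancel 2); [apply p_nd2|]. apply (p_cancel a); [apply p_nda|].
      replace (a * (2 * y)) with ((y*a-x*b) + (y*a - x * -b)) by ring.
      now apply Z.divide_add_r.
  - intros [[c Hc] [d Hd]]; subst x y.
    repeat split; [exists (c*a+d*b)|exists (d*a-c*b)|exists (c*a-d*b)|exists (d*a+c*b)]; ring.
Qed.

Lemma Rs_split k : 0 <= k ->
  Rs (p * k) = 2 * (a^4 - 6*a^2*b^2 + b^4) * Rs k
               - (if (k mod p =? 0) then p^4 * Rs (k / p) else 0).
Proof.
  intros Hk. pose proof p_gt1 as Hp1.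
  assert (Hq : 0 < a*a+b*b) by lia.
  assert (Hq' : 0 < a*a+(-b)*(-b)) by lia.
  set (D := gdiv (a,b)).
  set (L := shZ (p*k)).
  set (A := map (gmul (a,b)) (shZ k)).
  set (B := map (gmul (a,-b)) (shZ k)).
  assert (HL : Rs (p*k) = sumZ F (filter D L) + sumZ F (filter (fun z => negb (D z)) L))
    by apply sumZ_filter.
  assert (HB : sumZ F B = sumZ F (filter D B) + sumZ F (filter (fun z => negb (D z)) B))
    by apply sumZ_filter.
  assert (HA : sumZ F (filter D L) = sumZ F A).
  { apply sumZ_same; [apply NoDup_filter, shZ_NoDup|apply img_NoDup; lia|].
    intros z. unfold A, L. rewrite filter_In, img_shZ, in_shZ' by nia. rewrite Hab. tauto. }
  assert (HBn : sumZ F (filter (fun z => negb (D z)) B) =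
                sumZ F (filter (fun z => negb (D z)) L)).
  { apply sumZ_same; [apply NoDup_filter, img_NoDup; lia|apply NoDup_filter, shZ_NoDup|].
    intros [x y]. unfold B, L. rewrite !filter_In, img_shZ, in_shZ' by nia.
    replace (a*a + -b*-b) with p by (rewrite <- Hab; ring). simpl fst; simpl snd.
    split; [tauto|]. intros [HN HD]. split; auto. split; auto.
    destruct (split_d x y k HN) as [H|H]; auto. unfold D in HD. rewrite H in HD. discriminate. }
  assert (HSum : sumZ F A + sumZ F B = 2 * (a^4 - 6*a^2*b^2 + b^4) * Rs k).
  { unfold A, B, Rs. rewrite !sumZ_map, <- sumZ_add, <- sumZ_scale.
    apply sumZ_ext. intros z _. apply F_split. }
  assert (HC : sumZ F (filter D B) = if (k mod p =? 0) then p^4 * Rs (k / p) else 0).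
  { destruct (Z.eqb_spec (k mod p) 0) as [Hm|Hm].
    - apply Z.mod_divide in Hm; [|lia]. destruct Hm as [k' Hk'].
      assert (Hk'0 : 0 <= k') by nia.
      replace (k / p) with k' by (subst k; rewrite Z.div_mul; lia).
      transitivity (sumZ F (map (gmul (p,0)) (shZ k'))).
      + apply sumZ_same; [apply NoDup_filter, img_NoDup; lia|apply img_NoDup; nia|].
        intros [x y]. unfold B. rewrite !filter_In, !img_shZ by nia.
        simpl fst; simpl snd. rewrite (gdiv_spec p 0 x y) by nia.
        assert (E: forall u, (p*p+0*0 | u*p) <-> (p | u)).
        { intros u. split.
          - intros [c Hc]. exists c. apply (Z.mul_reg_r _ _ p); lia.
          - intros [c Hc]. exists c. subst; ring. }
        replace (x*p+y*0) with (x*p) by ring. replace (y*p-x*0) with (y*p) by ring. rewrite !E.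
        pose proof (split_both x y) as SB. unfold D. subst k.
        assert (x * x + y * y = p * (k' * p) <-> x * x + y * y = (p * p + 0 * 0) * k') by (split; intros; lia).
        replace (a * a + - b * - b) with p by (rewrite <- Hab; ring). tauto.
      + unfold Rs. rewrite sumZ_map, <- sumZ_scale. apply sumZ_ext. intros; apply F_scal.
    - destruct (filter D B) as [|z l] eqn:El; [reflexivity|]. exfalso.
      assert (Hz : In z (filter D B)) by (rewrite El; left; auto).
      destruct z as [x y]. unfold B in Hz. rewrite filter_In, img_shZ in Hz by nia.
      replace (a*a + -b*-b) with p in Hz by (rewrite <- Hab; ring). simpl in Hz.
      destruct Hz as [[HN H1] H2].
      assert (Hxy : (p | x) /\ (p | y)) by (apply split_both; auto).
      destruct Hxy as [[c Hc] [d Hd]]. subst x y. apply Hm.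
      apply Z.mod_divide; [lia|]. exists (c*c+d*d). apply (Z.mul_reg_l _ _ p); lia. }
  rewrite HL, HA, <- HBn, <- HC. lia.
Qed.
End Split.


Lemma center k x : 0 < k -> exists d, -k <= 2*(x - k*d) < k.
Proof.
  intros Hk. exists ((2*x+k)/(2*k)).
  pose proof (Z.div_mod (2*x+k) (2*k) ltac:(lia)).
  pose proof (Z.mod_pos_bound (2*x+k) (2*k) ltac:(lia)). lia.
Qed.

Lemma prime_div_small p k : prime p -> 1 < k < p -> ~ (k | p).
Proof.
  intros Hp Hk Hd. apply prime_divisors in Hd; auto. lia.
Qed.

Lemma descent p : prime p -> forall N k x y, (Z.to_nat k < N)%nat -> 0 < k < p ->
  x*x+y*y = k*p -> exists a b, a*a+b*b = p.
Proof.
  intros Hp N. induction N as [|N IH]; intros k x y HN Hk H; [lia|].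
  destruct (Z.eq_dec k 1) as [->|Hk1]; [exists x, y; lia|].
  destruct (center k x) as [d Hd]; [lia|]. destruct (center k y) as [e He]; [lia|].
  set (u := x - k*d) in *. set (v := y - k*e) in *.
  set (r := p - 2*(x*d+y*e) + k*(d*d+e*e)).
  assert (Hr : u*u+v*v = k*r).
  { subst u v r. transitivity ((x*x+y*y) - 2*k*(x*d+y*e) + k*k*(d*d+e*e)); [ring|].
    rewrite H. ring. }
  assert (Hu2 : 4*(u*u) <= k*k) by nia.
  assert (Hv2 : 4*(v*v) <= k*k) by nia.
  assert (Hr2 : k*(2*r) <= k*k) by lia.
  apply Z.mul_le_mono_pos_l in Hr2; [|lia].
  assert (Hr0 : 0 <= r).
  { assert (0 <= k*r) by nia. apply Z.mul_nonneg_cancel_l in H0; lia. }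
  destruct (Z.eq_dec r 0) as [E|E].
  - exfalso. rewrite E in Hr. assert (u = 0) by nia. assert (v = 0) by nia.
    apply (prime_div_small p k Hp); [lia|]. exists (d*d+e*e).
    apply (Z.mul_reg_l _ _ k); [lia|]. subst u v.
    assert (x = k*d) by lia. assert (y = k*e) by lia. subst x y.
    rewrite <- H. ring.
  - apply (IH r (p - x*d - y*e) (x*e - y*d)); [lia|lia|].
    transitivity (p*p - 2*p*(x*d+y*e) + (x*x+y*y)*(d*d+e*e)); [ring|].
    rewrite H. subst r. ring.
Qed.

Lemma sum2sq_of_div p x y : prime p -> (p | x*x+y*y) -> ~ (p | x) -> exists a b, a*a+b*b = p.
Proof.
  intros Hp [m Hm] Hx. assert (Hp1 : 1 < p) by (destruct Hp; auto).
  destruct (center p x) as [d Hd]; [lia|]. destruct (center p y) as [e He]; [lia|].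
  set (k0 := m - 2*(x*d+y*e) + p*(d*d+e*e)).
  assert (Hk : (x - p*d)*(x-p*d) + (y-p*e)*(y-p*e) = k0 * p).
  { subst k0. transitivity ((x*x+y*y) - 2*p*(x*d+y*e) + p*p*(d*d+e*e)); [ring|].
    rewrite Hm. ring. }
  set (u := x - p*d) in *. set (v := y - p*e) in *.
  assert (Hu2 : 4*(u*u) <= p*p) by nia.
  assert (Hv2 : 4*(v*v) <= p*p) by nia.
  assert (Hk0 : 0 < k0).
  { assert (0 <= k0*p) by nia. assert (0 <= k0) by (apply (Z.mul_nonneg_cancel_r _ p); lia).
    destruct (Z.eq_dec k0 0) as [E|E]; [|lia].
    exfalso. rewrite E in Hk. assert (u = 0) by nia. apply Hx. exists d. subst u. lia. }
  assert (Hk1 : p*(2*k0) <= p*p) by lia.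
  apply Z.mul_le_mono_pos_l in Hk1; [|lia].
  apply (descent p Hp (S (Z.to_nat k0)) k0 u v); [lia| |auto].
  split; auto. lia.
Qed.

Lemma nonsplit_div p x y : prime p -> (forall a b, a*a+b*b <> p) ->
  (p | x*x+y*y) -> (p | x) /\ (p | y).
Proof.
  intros Hp Hns Hd.
  assert (Hx : (p | x)).
  { destruct (Znumtheory.Zdivide_dec p x) as [H|H]; auto.
    destruct (sum2sq_of_div p x y Hp Hd H) as [a [b Hab]]. exfalso; eapply Hns; eauto. }
  split; auto. assert (p | y*y).
  { replace (y*y) with ((x*x+y*y) - x*x) by ring. apply Z.divide_sub_r; auto.
    apply Z.divide_mul_l; auto. }
  apply prime_mult in H; auto; tauto.
Qed.

Fixpoint cs (s P : Z) (e : nat) : Z :=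
  match e with
  | O => 1
  | S e' => match e' with
            | O => s
            | S e'' => s * cs s P e' - P * cs s P e''
            end
  end.

Lemma cs_ndiv p s P : prime p -> ~ (p | s) -> (p | P) ->
  forall e, ~ (p | cs s P e) /\ ~ (p | cs s P (S e)).
Proof.
  intros Hp Hs HP e. induction e as [|e [IH1 IH2]].
  - simpl. split; auto. intros H. apply Z.divide_1_r in H. destruct Hp; lia.
  - split; auto. change (cs s P (S (S e))) with (s * cs s P (S e) - P * cs s P e).
    intros H. assert (p | s * cs s P (S e)).
    { replace (s * cs s P (S e)) with ((s * cs s P (S e) - P * cs s P e) + P * cs s P e) by ring.
      apply Z.divide_add_r; auto. apply Z.divide_mul_l; auto. }
    apply prime_mult in H0; auto; tauto.
Qed.


Lemma prime_factor_ex : forall N m, (Z.to_nat m < N)%nat -> 1 < m -> exists p, prime p /\ (p | m).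
Proof.
  induction N as [|N IH]; intros m HN Hm; [lia|].
  destruct (prime_dec m) as [H|H]; [exists m; split; auto; apply Z.divide_refl|].
  destruct (not_prime_divide m Hm H) as [n [Hn Hd]].
  destruct (IH n ltac:(lia) ltac:(lia)) as [p [Hp Hpn]].
  exists p; split; auto. eapply Z.divide_trans; eauto.
Qed.

Lemma factor_out p : 1 < p -> forall N m, (Z.to_nat m < N)%nat -> 0 < m ->
  exists e n', m = p ^ Z.of_nat e * n' /\ ~ (p | n') /\ 0 < n'.
Proof.
  intros Hp N. induction N as [|N IH]; intros m HN Hm; [lia|].
  destruct (Znumtheory.Zdivide_dec p m) as [[c Hc]|H].
  - assert (0 < c) by nia.
    assert (c < m) by nia.
    destruct (IH c ltac:(lia) H) as [e [n' [E [H1 H2]]]].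
    exists (S e), n'. split; auto. rewrite Nat2Z.inj_succ, Z.pow_succ_r by lia. rewrite Hc, E; ring.
  - exists O, m. split; [rewrite Z.pow_0_r; ring|]. auto.
Qed.

Lemma nonempty_div a b k x y : 0 < a*a+b*b -> 0 <= k ->
  x*x+y*y = (a*a+b*b)*k -> gdiv (a,b) (x,y) = true -> exists u v, u*u+v*v = k.
Proof.
  intros Hq Hk HN Hd. assert (Hin : In (x,y) (map (gmul (a,b)) (shZ k))).
  { apply img_shZ; auto. }
  apply in_map_iff in Hin as [[u v] [_ Hin]]. apply in_shZ in Hin; auto. eauto.
Qed.

Lemma Rs_1 : Rs 1 = 4.
Proof. vm_compute. reflexivity. Qed.

Section SplitPow.
Variables p a b : Z.
Hypothesis Hp : prime p.
Hypothesis Hp2 : p <> 2.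
Hypothesis Hab : a*a+b*b = p.

Definition sp := 2 * (a^4 - 6*a^2*b^2 + b^4).

Lemma sp_ndiv : ~ (p | sp).
Proof.
  intros H. assert (p | 2 * (2 * (2 * (2 * (a*(a*(a*a))))))).
  { replace (2 * (2 * (2 * (2 * (a*(a*(a*a))))))) with (sp - p * (2*(b*b - 7*a*a))).
    - apply Z.divide_sub_r; auto. apply Z.divide_mul_l, Z.divide_refl.
    - unfold sp. rewrite <- Hab. ring. }
  assert (N2 : ~ (p | 2)) by (eapply p_nd2; eauto). assert (Na : ~ (p | a)) by (eapply p_nda; eauto).
  repeat (apply prime_mult in H0; auto; destruct H0 as [H0|H0]; [tauto|]). tauto.
Qed.

Lemma Rs_pow n' : ~ (p | n') -> 0 <= n' -> forall e,
  Rs (p ^ Z.of_nat e * n') = cs sp (p^4) e * Rs n' /\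
  Rs (p ^ Z.of_nat (S e) * n') = cs sp (p^4) (S e) * Rs n'.
Proof.
  intros Hn Hn0. assert (Hp1 : 1 < p) by (destruct Hp; auto).
  induction e as [|e [IH1 IH2]].
  - split; [change (Z.of_nat 0) with 0; rewrite Z.pow_0_r, Z.mul_1_l; change (cs sp (p^4) 0) with 1; ring|].
    change (Z.of_nat 1) with 1. change (cs sp (p^4) 1) with sp.
    rewrite Z.pow_1_r, (Rs_split p a b Hp Hp2 Hab n' Hn0).
    destruct (Z.eqb_spec (n' mod p) 0) as [E|E].
    + exfalso. apply Hn. apply Z.mod_divide; auto; lia.
    + unfold sp. ring.
  - split; auto.
    change (cs sp (p^4) (S (S e))) with (sp * cs sp (p^4) (S e) - p^4 * cs sp (p^4) e).
    assert (E : p ^ Z.of_nat (S (S e)) * n' = p * (p ^ Z.of_nat (S e) * n')).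
    { rewrite (Nat2Z.inj_succ (S e)), Z.pow_succ_r by lia. ring. }
    assert (Hpos : 0 <= p ^ Z.of_nat (S e)) by (apply Z.pow_nonneg; lia).
    rewrite E, (Rs_split p a b Hp Hp2 Hab) by nia.
    assert (E2 : p ^ Z.of_nat (S e) * n' = (p ^ Z.of_nat e * n') * p).
    { rewrite Nat2Z.inj_succ, Z.pow_succ_r by lia. ring. }
    rewrite !E2. rewrite Z.mod_mul, Z.div_mul by lia. simpl (0 =? 0).
    rewrite <- E2, IH1, IH2. unfold sp. simpl. ring.
Qed.

Lemma nonempty_pow : forall e k, 0 <= k ->
  (exists x y, x*x+y*y = p ^ Z.of_nat e * k) -> exists x y, x*x+y*y = k.
Proof.
  assert (Hp1 : 1 < p) by (destruct Hp; auto).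
  induction e as [|e IH]; intros k Hk [x [y H]].
  - exists x, y. change (Z.of_nat 0) with 0 in H; rewrite Z.pow_0_r in H; lia.
  - apply IH; auto.
    assert (Hpos : 0 <= p ^ Z.of_nat e) by (apply Z.pow_nonneg; lia).
    assert (H' : x*x+y*y = p * (p ^ Z.of_nat e * k)).
    { rewrite H, Nat2Z.inj_succ, Z.pow_succ_r by lia. ring. }
    destruct (split_d p a b Hp Hp2 Hab x y _ H') as [Hd|Hd].
    + apply (nonempty_div a b _ x y); [lia|nia|rewrite Hab; exact H'|exact Hd].
    + apply (nonempty_div a (-b) _ x y); [nia|nia| |exact Hd].
      replace (a*a + -b*-b) with p by (rewrite <- Hab; ring). exact H'.
Qed.
End SplitPow.


Lemma two_div x y c : x*x+y*y = 2*c -> gdiv (1,1) (x,y) = true.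
Proof.
  intros H. apply gdiv_spec; [lia|]. simpl (1*1+1*1).
  destruct (Z.Even_or_Odd x) as [[q Hq]|[q Hq]]; destruct (Z.Even_or_Odd y) as [[r Hr]|[r Hr]]; subst.
  - split; [exists (q+r)|exists (r-q)]; ring.
  - exfalso. nia.
  - exfalso. nia.
  - split; [exists (q+r+1)|exists (r-q)]; ring.
Qed.

Lemma Rs_nonzero : forall N m, (Z.to_nat m < N)%nat -> 0 < m ->
  (exists x y, x*x+y*y = m) -> Rs m <> 0.
Proof.
  induction N as [|N IH]; intros m HN Hm Hne; [lia|].
  destruct (Z.eq_dec m 1) as [->|Hm1]; [rewrite Rs_1; lia|].
  destruct (prime_factor_ex (S (Z.to_nat m)) m ltac:(lia) ltac:(lia)) as [p [Hp [c Hc]]].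
  assert (Hp1 : 1 < p) by (destruct Hp; auto).
  assert (Hc0 : 0 < c) by nia.
  destruct (Z.eq_dec p 2) as [->|Hp2].
  - assert (E : m = (1*1+1*1)*c) by lia.
    rewrite E, (Rs_mul 1 1 c (-4)); try lia.
    + assert (Rs c <> 0); [|lia]. apply IH; [lia|lia|].
      destruct Hne as [x [y Hxy]]. apply (nonempty_div 1 1 c x y); try lia.
      apply (two_div x y c). lia.
    + intros [x y] Hxy. cbn [fst snd] in Hxy. apply (two_div x y c). lia.
    + apply F_1i.
  - destruct (classic (exists a b, a*a+b*b = p)) as [[a [b Hab]]|Hns].
    + destruct (factor_out p Hp1 (S (Z.to_nat m)) m ltac:(lia) Hm) as [e [n' [E [Hn' Hn'0]]]].
      destruct e as [|e].
      { exfalso. apply Hn'. rewrite Z.pow_0_r, Z.mul_1_l in E. subst n'. exists c; auto. }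
      assert (Hpe : p <= p ^ Z.of_nat (S e)).
      { rewrite Nat2Z.inj_succ, Z.pow_succ_r by lia.
        assert (0 < p ^ Z.of_nat e) by (apply Z.pow_pos_nonneg; lia). nia. }
      assert (Hlt : n' < m) by nia.
      pose proof (Rs_pow p a b Hp Hp2 Hab n' Hn' ltac:(lia) (S e)) as [HR _].
      rewrite E, HR. apply Z.neq_mul_0. split.
      * intros H0. apply (proj1 (cs_ndiv p (sp a b) (p^4) Hp (sp_ndiv p a b Hp Hp2 Hab)
            ltac:(exists (p^3); ring) (S e))). rewrite H0. apply Z.divide_0_r.
      * apply IH; [lia|lia|]. apply (nonempty_pow p a b Hp Hp2 Hab (S e)); [lia|]. rewrite <- E; auto.
    + assert (Hns' : forall a b, a*a+b*b <> p) by (intros a b H; apply Hns; eauto).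
      destruct Hne as [x [y Hxy]].
      destruct (nonsplit_div p x y Hp Hns') as [[x1 Hx1] [y1 Hy1]].
      { exists c. lia. }
      subst x y. set (k := x1*x1+y1*y1).
      assert (E : m = (p*p+0*0)*k) by (subst k; lia).
      assert (Hk : 0 < k) by nia.
      assert (Hkm : k < m). { assert (1 < p*p) by nia. rewrite E. nia. }
      rewrite E, (Rs_mul p 0 k (p^4)); try nia.
      * assert (Rs k <> 0); [|assert (p^4 <> 0) by (apply Z.pow_nonzero; lia); nia].
        apply IH; [lia|lia|]. exists x1, y1. reflexivity.
      * intros [x y] Hxy2. cbn [fst snd] in Hxy2. apply gdiv_spec; [nia|].
        destruct (nonsplit_div p x y Hp Hns') as [[u Hu] [v Hv]].
        { exists (p*k). lia. }
        subst x y. split; [exists u|exists v]; ring.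
      * intros w; apply F_scal.
Qed.


Close Scope Z_scope.
From Coquelicot Require Import Coquelicot.
Open Scope R_scope.

Definition f4 (x y : R) : R := x^4 - 6*x^2*y^2 + y^4.

Lemma f4_poly : poly2_deg_le 4 f4.
Proof.
  exists [(1, 4%nat, 0%nat); (-6, 2%nat, 2%nat); (1, 0%nat, 4%nat)]. split.
  - repeat constructor; simpl; lia.
  - intros x y. unfold f4. simpl. ring.
Qed.

Lemma circle_f4 : circle_avg f4 = 0.
Proof.
  unfold circle_avg.
  assert (H : is_RInt (fun th => f4 (cos th) (sin th)) 0 (2*PI)
     ((fun t => sin t * cos t * (cos t ^ 2 - sin t ^ 2)) (2*PI) -
      (fun t => sin t * cos t * (cos t ^ 2 - sin t ^ 2)) 0)).
  { apply (is_RInt_derive (fun t => sin t * cos t * (cos t ^ 2 - sin t ^ 2))).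
    - intros x _. auto_derive; auto. unfold f4. ring.
    - intros x _. apply (ex_derive_continuous (K:=R_AbsRing) (V:=R_NormedModule)). unfold f4. auto_derive. auto. }
  simpl in H. rewrite sin_2PI, sin_0 in H.
  rewrite (is_RInt_unique _ _ _ _ H). field. apply PI_neq0.
Qed.


Lemma sum_gen (m : nat) (l : list (Z*Z)) : (0 < m)%nat ->
  fold_right (fun p acc => f4 (fst p) (snd p) + acc) 0
    (map (fun p => (fst p / sqrt (INR m), snd p / sqrt (INR m)))
       (map (fun p => (IZR (fst p), IZR (snd p))) l))
  = IZR (sumZ F l) / (INR m)^2.
Proof.
  intros Hm. assert (Hr : 0 < sqrt (INR m)) by (apply sqrt_lt_R0, lt_0_INR; lia).
  assert (Hr2 : sqrt (INR m) * sqrt (INR m) = INR m) by (apply sqrt_sqrt, pos_INR).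
  assert (HmR : 0 < INR m) by (apply lt_0_INR; lia).
  induction l as [|[x y] l IH]; cbn [fold_right map fst snd sumZ]; [unfold sumZ; simpl; field; lra|].
  rewrite IH. rewrite plus_IZR.
  assert (EF : F (x,y) = (x*x*x*x - 6*(x*x)*(y*y) + y*y*y*y)%Z) by (cbv [F]; ring).
  change (fold_right (fun (z : Z * Z) (acc : Z) => (F z + acc)%Z) 0%Z l) with (sumZ F l). rewrite EF, plus_IZR, minus_IZR, !mult_IZR. unfold f4.
  replace (INR m ^ 2) with ((sqrt (INR m) * sqrt (INR m))^2) by (rewrite Hr2; ring). field. lra.
Qed.

Theorem theorem1p1 :
  forall m : nat, (0 < m)%nat ->
    (exists x1 x2 : Z, (x1 * x1 + x2 * x2)%Z = Z.of_nat m) ->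
    ~ is_spherical_design_r 4 (sqrt (INR m)) (shell_R m).
Proof.
  intros m Hm Hex Hd. destruct Hd as [Hne [_ [_ Hf]]].
  specialize (Hf f4 f4_poly). rewrite circle_f4 in Hf.
  unfold list_avg, shell_R in Hf. rewrite sum_gen in Hf by auto.
  assert (HR : Rs (Z.of_nat m) <> 0%Z).
  { apply (Rs_nonzero (S (Z.to_nat (Z.of_nat m)))); [lia|lia|auto]. }
  unfold Rs, shZ in HR. rewrite Nat2Z.id in HR.
  set (L := map _ _) in *.
  assert (HL : INR (length L) <> 0).
  { destruct L; [contradiction|]. apply not_0_INR. simpl. lia. }
  assert (HmR : 0 < INR m) by (apply lt_0_INR; lia).
  apply HR, eq_IZR. unfold Rdiv in Hf.
  apply Rmult_integral in Hf as [Hf|Hf].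
  - apply Rmult_integral in Hf as [Hf|Hf]; auto.
    exfalso. apply Rinv_neq_0_compat in Hf; auto. apply pow_nonzero; lra.
  - exfalso. revert Hf. apply Rinv_neq_0_compat; auto.
Qed.
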